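(* Let $A,B$ be positive definite matrices with $mI\le A,B\le MI$ for some scalars $0<m<M$, put $h=M/m$, and let $\Phi$ be a unital positive linear map between matrix algebras. Then \[K(h,p)^{1/p}\Big(\mathrm{Tr}\big[\Phi(A^p)^{1/p}\big]+\mathrm{Tr}\big[\Phi(B^p)^{1/p}\big]\Big)\le\mathrm{Tr}\big[\Phi((A+B)^p)^{1/p}\big]\le K(h,p)^{-1/p}\Big(\mathrm{Tr}\big[\Phi(A^p)^{1/p}\big]+\mathrm{Tr}\big[\Phi(B^p)^{1/p}\big]\Big)\] for all $p<0$ and all $0<p\le1$, and \[K(h,p)^{-1/p}\Big(\mathrm{Tr}\big[\Phi(A^p)^{1/p}\big]+\mathrm{Tr}\big[\Phi(B^p)^{1/p}\big]\Big)\le\mathrm{Tr}\big[\Phi((A+B)^p)^{1/p}\big]\le K(h,p)^{1/p}\Big(\mathrm{Tr}\big[\Phi(A^p)^{1/p}\big]+\mathrm{Tr}\big[\Phi(B^p)^{1/p}\big]\Big)\] for all $p\ge1$.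
   Context: $\mathrm{Tr}$ is the trace, $\le$ the Löwner order; unital positive linear map: preserves positive semidefiniteness and $\Phi(I)=I$. Generalized Kantorovich constant: $K(h,p)=\frac{h^p-h}{(p-1)(h-1)}\Big(\frac{p-1}{p}\frac{h^p-1}{h^p-h}\Big)^p$ (with $K(h,1)=1$ by continuity). *)

(* Defs.v *)
From HB Require Import structures.
From mathcomp Require Import all_boot all_order all_algebra.
From mathcomp Require Import sesquilinear spectral.
From mathcomp Require Import complex.
From mathcomp Require Import reals exp.
Set Implicit Arguments. Unset Strict Implicit. Unset Printing Implicit Defensive.
Import Order.TTheory GRing.Theory Num.Theory Num.Def.
Local Open Scope ring_scope.
Local Open Scope complex_scope.

Section Defs.
Variable R : realType.
Local Notation C := R[i].

Definition psdmx n (M : 'M[C]_n) : Prop :=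
  M \is hermsymmx /\ forall v : 'rV[C]_n, 0 <= (v *m M *m (map_mx conjC v)^T) 0 0.

Definition posdefmx n (M : 'M[C]_n) : Prop :=
  M \is hermsymmx /\ forall v : 'rV[C]_n, v != 0 -> 0 < (v *m M *m (map_mx conjC v)^T) 0 0.

Definition lowner n (A B : 'M[C]_n) : Prop := psdmx (B - A).

Definition mxfun n (f : R -> R) (A : 'M[C]_n) : 'M[C]_n :=
  invmx (spectralmx A) *m
  diag_mx (map_mx (fun z : C => (f (complex.Re z))%:C) (spectral_diag A)) *m spectralmx A.

Definition mxpow n (A : 'M[C]_n) (p : R) : 'M[C]_n := mxfun (fun x => powR x p) A.

Definition unital_positive_linear n k (Phi : 'M[C]_n -> 'M[C]_k) : Prop :=
  linear Phi /\ (forall X, psdmx X -> psdmx (Phi X)) /\ Phi 1%:M = 1%:M.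

Definition Kant (h p : R) : R :=
  if p == 1 then 1 else
  (powR h p - h) / ((p - 1) * (h - 1)) *
  powR ((p - 1) / p * ((powR h p - 1) / (powR h p - h))) p.

End Defs.

(* Main.v *)
Require Import Defs.
From HB Require Import structures.
From mathcomp Require Import all_boot all_order all_algebra.
From mathcomp Require Import sesquilinear spectral.
From mathcomp Require Import complex.
From mathcomp Require Import reals exp.
From mathcomp Require Import sequences.
From mathcomp Require Import ring lra.
Import Order.TTheory GRing.Theory Num.Theory Num.Def.
Local Open Scope ring_scope.
Local Open Scope complex_scope.

Section Scal.
Variable R : realType.
Implicit Types s p t c x y a b h : R.

Lemma bern_ccv s p : 0 < s -> 0 <= p <= 1 -> powR s p <= 1 + p * (s - 1).
Proof.
move=> s0 /andP[p0 p1].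
have [->|pn0] := eqVneq p 0; first by rewrite powRr0 mul0r addr0.
have [->|pn1] := eqVneq p 1; first by rewrite powRr1; [lra | exact: ltW].
have pp : 0 < p by rewrite lt_def pn0.
have pl : p < 1 by rewrite lt_neqAle pn1.
have q0 : 0 < 1 - p by rewrite subr_gt0.
have ip : 0 < p^-1 by rewrite invr_gt0.
have iq : 0 < (1 - p)^-1 by rewrite invr_gt0.
have e : p^-1^-1 + (1 - p)^-1^-1 = 1 by rewrite !invrK addrC subrK.
have H := @conjugate_powR R (powR s p) 1 p^-1 (1 - p)^-1 (powR_ge0 _ _) ler01 ip iq e.
have e2 : powR (powR s p) p^-1 = s.
  by rewrite -powRrM mulfV ?gt_eqF // powRr1 // ltW.
rewrite e2 powR1 mulr1 !invrK in H.
apply: (le_trans H); lra.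
Qed.

Lemma bern_cvx s p : 0 < s -> (p <= 0) || (1 <= p) -> 1 + p * (s - 1) <= powR s p.
Proof.
move=> s0 /orP[p0|p1].
  rewrite /powR gt_eqF //.
  apply: le_trans (expR_ge1Dx _).
  have L : ln s <= s - 1.
    by have := @le_ln1Dx R (s - 1); rewrite subrKC; apply; lra.
  nra.
have p0 : 0 < p by lra.
have u0 : 0 < powR s p by rewrite powR_gt0.
have ip : 0 <= p^-1 <= 1 by rewrite invr_ge0 ltW //= invf_le1.
have H := @bern_ccv (powR s p) p^-1 u0 ip.
have e2 : powR (powR s p) p^-1 = s.
  by rewrite -powRrM mulfV ?gt_eqF // powRr1 // ltW.
rewrite e2 in H.
have : p * s <= p * (1 + p^-1 * (powR s p - 1)) by rewrite ler_pM2l.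
rewrite mulrDr mulrA mulfV ?gt_eqF // mul1r mulr1; lra.
Qed.

Lemma tang_cvx t c p : 0 < t -> 0 < c -> (p <= 0) || (1 <= p) ->
  powR c p * (1 + p * (t / c - 1)) <= powR t p.
Proof.
move=> t0 c0 hp.
have -> : powR t p = powR c p * powR (t / c) p.
  by rewrite -powRM ?ltW ?divr_gt0 // mulrC divfK ?gt_eqF.
by rewrite ler_wpM2l ?powR_ge0 // bern_cvx ?divr_gt0.
Qed.

Lemma tang_ccv t c p : 0 < t -> 0 < c -> 0 <= p <= 1 ->
  powR t p <= powR c p * (1 + p * (t / c - 1)).
Proof.
move=> t0 c0 hp.
have -> : powR t p = powR c p * powR (t / c) p.
  by rewrite -powRM ?ltW ?divr_gt0 // mulrC divfK ?gt_eqF.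
by rewrite ler_wpM2l ?powR_ge0 // bern_ccv ?divr_gt0.
Qed.


Lemma sum_aff (I : finType) (w x : I -> R) al be :
  \sum_i w i * (al + be * x i) = al * \sum_i w i + be * \sum_i w i * x i.
Proof.
rewrite !mulr_sumr -big_split /=; apply: eq_bigr => i _; ring.
Qed.

Lemma powR_expln x p : 0 < x -> powR x p = expR (p * ln x).
Proof. by move=> x0; rewrite /powR gt_eqF. Qed.

Lemma Hsign h p : 1 < h ->
  [/\ 1 < p -> h < powR h p, 0 < p < 1 -> 1 < powR h p /\ powR h p < h
    & p < 0 -> powR h p < 1].
Proof.
move=> h1; have h0 : 0 < h by lra.
have l0 : 0 < ln h by rewrite ln_gt0.
have eh : h = expR (ln h) by rewrite lnK // posrE.
rewrite powR_expln //; split.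
- move=> p1; rewrite {1}eh ltr_expR; nra.
- move=> /andP[p0 p1]; split; first by rewrite -expR0 ltr_expR; nra.
  by rewrite {2}eh ltr_expR; nra.
- by move=> p0; rewrite -expR0 ltr_expR; nra.
Qed.

Definition ell a h p x := powR a p * (h - powR h p) / (h - 1) +
  powR a p * (powR h p - 1) / (a * (h - 1)) * x.

Lemma chord a h p x : 0 < a -> 1 < h -> a <= x <= a * h ->
  (((p <= 0) || (1 <= p)) -> powR x p <= ell a h p x) /\
  (0 <= p <= 1 -> ell a h p x <= powR x p).
Proof.
move=> a0 h1 /andP[ax xb].
have x0 : 0 < x by lra.
have ab : 0 < a * (h - 1) by rewrite mulr_gt0 // subr_gt0.
have e : ell a h p x = ((a * h - x) * powR a p + (x - a) * (powR a p * powR h p))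
   / (a * (h - 1)).
  rewrite /ell; field; rewrite ?gt_eqF //; lra.
have hb : powR (a * h) p = powR a p * powR h p by rewrite powRM; lra.
set X := powR x p; set A := powR a p; set HH := powR h p.
have E : (a * h - x) * (X * (1 + p * (a / x - 1))) +
   (x - a) * (X * (1 + p * (a * h / x - 1))) = X * (a * (h - 1)).
  by field; rewrite gt_eqF.
have bx : 0 <= a * h - x by lra.
have xa : 0 <= x - a by lra.
rewrite e; split => hp.
- rewrite ler_pdivlMr // -E -hb.
  apply: lerD; apply: ler_wpM2l => //; apply: tang_cvx => //; nra.
- rewrite ler_pdivrMr // -E -hb.
  apply: lerD; apply: ler_wpM2l => //; apply: tang_ccv => //; nra.
Qed.

Definition rK h p := (p - 1) / p * ((powR h p - 1) / (powR h p - h)).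
Definition FK h p := (powR h p - h) / ((p - 1) * (h - 1)).

Lemma div_pos x y : 0 < x * y -> 0 < x / y.
Proof.
move=> xy; have y0 : y != 0 by apply/eqP => y0; rewrite y0 mulr0 ltxx in xy.
have -> : x / y = (x * y) / (y * y) by field.
by rewrite divr_gt0 // lt_def mulf_neq0 //= -expr2 sqr_ge0.
Qed.


Lemma div_neg x y : x * y < 0 -> x / y < 0.
Proof.
move=> xy; have y0 : y != 0 by apply/eqP => y0; rewrite y0 mulr0 ltxx in xy.
have -> : x / y = (x * y) / (y * y) by field.
rewrite pmulr_llt0 // invr_gt0 lt_def mulf_neq0 //= -expr2 sqr_ge0 //.
Qed.

Lemma KantE h p : p != 1 -> Kant h p = FK h p * powR (rK h p) p.
Proof. by move=> /negbTE p1; rewrite /Kant p1. Qed.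

Lemma rF_pos h p : 1 < h -> p != 0 -> p != 1 -> 0 < rK h p /\ 0 < FK h p.
Proof.
move=> h1 p0 p1; have [H1 H2 H3] := Hsign h p h1.
rewrite /rK /FK; set H := powR h p in H1 H2 H3 *.
have [pn|pp] := ltP p 0.
  have := H3 pn => Hl.
  have a1 : 0 < (p - 1) / p by apply: div_pos; nra.
  have a2 : 0 < (H - 1) / (H - h) by apply: div_pos; nra.
  split; first exact: mulr_gt0.
  have q : (p - 1) * (h - 1) < 0 by nra.
  by apply: div_pos; nra.
have [pl|pg] := ltP p 1.
  have p0' : 0 < p by rewrite lt_def p0.
  have [Hl Hr] := H2 (andb_true_intro (conj p0' pl)).
  have a1 : (p - 1) / p < 0 by apply: div_neg; nra.
  have a2 : (H - 1) / (H - h) < 0 by apply: div_neg; nra.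
  split; first by nra.
  have q : (p - 1) * (h - 1) < 0 by nra.
  by apply: div_pos; nra.
have pg' : 1 < p by rewrite lt_def p1.
have Hl := H1 pg'.
have a1 : 0 < (p - 1) / p by apply: div_pos; nra.
have a2 : 0 < (H - 1) / (H - h) by apply: div_pos; nra.
split; first exact: mulr_gt0.
have q : 0 < (p - 1) * (h - 1) by nra.
by apply: div_pos; nra.
Qed.

Lemma Hneq h p : 1 < h -> p != 1 -> powR h p != h.
Proof.
move=> h1 p1; have h0 : 0 < h by lra.
have l0 : 0 < ln h by rewrite ln_gt0.
rewrite powR_expln //; apply/eqP => E.
have : ln (expR (p * ln h)) = ln h by rewrite E.
rewrite expRK => E2.
have : (p - 1) * ln h = 0 by rewrite mulrBl E2 mul1r subrr.
move/eqP; rewrite mulf_eq0 subr_eq0 (negbTE p1) /= => /eqP l; lra.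
Qed.

Lemma kbound a h p y : 0 < a -> 1 < h -> 0 < y -> p != 0 -> p != 1 ->
  ((p <= 0) || (1 <= p) -> ell a h p y <= Kant h p * powR y p) /\
  (0 <= p <= 1 -> Kant h p * powR y p <= ell a h p y).
Proof.
move=> a0 h1 y0 p0 p1.
have [r0 F0] := rF_pos h p h1 p0 p1.
rewrite KantE //.
set r := rK h p; set F := FK h p; set c := a / r.
have c0 : 0 < c by rewrite divr_gt0.
have eA : powR a p = powR r p * powR c p.
  by rewrite -powRM ?ltW // /c mulrC divfK ?gt_eqF.
have Hh := Hneq h p h1 p1.
have H1 : powR h p - 1 != 0.
  apply/eqP => E; move: r0; rewrite /r /rK E mul0r mulr0 ltxx //.
have key : ell a h p y = F * powR r p * (powR c p * (1 + p * (y / c - 1))).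
  rewrite mulrA -(mulrA F) -eA /ell /F /FK /c /r /rK.
  field.
  rewrite -subr_eq0 in Hh; rewrite Hh p0 H1 subr_eq0 p1 gt_eqF //=.
  by rewrite subr_eq0 gt_eqF.
have Fr : 0 <= F * powR r p by rewrite mulr_ge0 ?powR_ge0 ?ltW.
rewrite key; split => hp.
- by rewrite ler_wpM2l // tang_cvx.
- by rewrite ler_wpM2l // tang_ccv.
Qed.


Lemma powRK g p : 0 <= g -> p != 0 -> powR (powR g p) p^-1 = g.
Proof. by move=> g0 p0; rewrite -powRrM mulfV // powRr1. Qed.

Lemma powRKK K g p : 0 <= K -> 0 <= g -> p != 0 ->
  powR (K * powR g p) p^-1 = powR K p^-1 * g.
Proof.
by move=> K0 g0 p0; rewrite powRM ?powR_ge0 // powRK.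
Qed.

Lemma powR_inv_mono z1 z2 p : 0 < z1 -> z1 <= z2 ->
  (0 < p -> powR z1 p^-1 <= powR z2 p^-1) /\
  (p < 0 -> powR z2 p^-1 <= powR z1 p^-1).
Proof.
move=> z0 z12; split => hp.
  by apply: ge0_ler_powR; rewrite ?invr_ge0 ?nnegrE //; lra.
have e z : powR z p^-1 = (powR z (- p^-1))^-1 by rewrite -powRN opprK.
rewrite !e.
have q : 0 < - p^-1 by rewrite oppr_gt0 invr_lt0.
have a1 : 0 < powR z1 (- p^-1) by rewrite powR_gt0.
have a2 : 0 < powR z2 (- p^-1) by rewrite powR_gt0 //; lra.
rewrite lef_pV2 ?posrE //.
by apply: ge0_ler_powR; rewrite ?nnegrE //; lra.
Qed.

Lemma pmean (I : finType) (w x : I -> R) a h p :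
  0 < a -> 1 < h -> (forall i, 0 <= w i) -> \sum_i w i = 1 ->
  (forall i, a <= x i <= a * h) -> p != 0 ->
  (p <= 1 -> powR (Kant h p) p^-1 * (\sum_i w i * x i) <=
               powR (\sum_i w i * powR (x i) p) p^-1 <= \sum_i w i * x i) /\
  (1 <= p -> \sum_i w i * x i <= powR (\sum_i w i * powR (x i) p) p^-1 <=
               powR (Kant h p) p^-1 * \sum_i w i * x i).
Proof.
move=> a0 h1 w0 w1 xb p0.
set g := \sum_i w i * x i; set S := \sum_i w i * powR (x i) p.
have x0 i : 0 < x i by have := xb i; lra.
have ga : a <= g.
  have -> : a = \sum_i w i * a by rewrite -mulr_suml w1 mul1r.
  by apply: ler_sum => i _; apply: ler_wpM2l => //; have := xb i; lra.
have gb : g <= a * h.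
  have -> : a * h = \sum_i w i * (a * h) by rewrite -mulr_suml w1 mul1r.
  by apply: ler_sum => i _; apply: ler_wpM2l => //; have := xb i; lra.
have g0 : 0 < g by lra.
have [ep|p1] := eqVneq p 1.
  have eS : S = g by rewrite /S ep; apply: eq_bigr => i _; rewrite powRr1 // ltW.
  rewrite eS ep invr1 (powRr1 (ltW g0)) /Kant eqxx powR1 mul1r lexx; split => //.
(* Jensen *)
have eJ : \sum_i w i * (powR g p * (1 - p) + powR g p * p / g * x i) = powR g p.
  by rewrite sum_aff w1 mulr1 -/g; field; rewrite gt_eqF.
have tg i : powR g p * (1 + p * (x i / g - 1)) =
            powR g p * (1 - p) + powR g p * p / g * x i.
  by field; rewrite gt_eqF.
have eL : \sum_i w i * ell a h p (x i) = ell a h p g.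
  by rewrite /ell sum_aff w1 mulr1.
have Kg := kbound a h p g a0 h1 g0 p0 p1.
have K0 : 0 < Kant h p.
  have [r0 F0] := rF_pos h p h1 p0 p1.
  by rewrite KantE // mulr_gt0 // powR_gt0.
have [pn|pp] := ltP p 0.
  have cv : (p <= 0) || (1 <= p) by rewrite ltW.
  have J : powR g p <= S.
    rewrite -eJ; apply: ler_sum => i _; rewrite -tg.
    by apply: ler_wpM2l => //; apply: tang_cvx.
  have Ch : S <= ell a h p g.
    rewrite -eL; apply: ler_sum => i _; apply: ler_wpM2l => //.
    by have [+ _] := chord a h p (x i) a0 h1 (xb i) => /(_ cv).
  have Kb := (Kg.1 cv).
  split=> hp; last by lra.
  have gp : 0 < powR g p by rewrite powR_gt0.
  have S0 : 0 < S by lra.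
  have [_ m1] := powR_inv_mono (powR g p) S p gp J.
  have [_ m2] := powR_inv_mono S (Kant h p * powR g p) p S0 (le_trans Ch Kb).
  rewrite powRK ?(ltW g0) // in m1; rewrite powRKK ?(ltW g0) ?(ltW K0) // in m2.
  by apply/andP; split; [exact: m2 | exact: m1].
have pp' : 0 < p by rewrite lt_def p0.
have gp : 0 < powR g p by rewrite powR_gt0.
have [pl|pg] := ltP p 1.
  have cc : 0 <= p <= 1 by rewrite pp ltW.
  have J : S <= powR g p.
    rewrite -eJ; apply: ler_sum => i _; rewrite -tg.
    by apply: ler_wpM2l => //; apply: tang_ccv.
  have Ch : ell a h p g <= S.
    rewrite -eL; apply: ler_sum => i _; apply: ler_wpM2l => //.
    by have [_ +] := chord a h p (x i) a0 h1 (xb i) => /(_ cc).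
  have Kb := (Kg.2 cc).
  have Kg0 : 0 < Kant h p * powR g p by rewrite mulr_gt0.
  split=> hp; last by lra.
  have S0 : 0 < S by lra.
  have [m1 _] := powR_inv_mono S (powR g p) p S0 J.
  have [m2 _] := powR_inv_mono (Kant h p * powR g p) S p Kg0 (le_trans Kb Ch).
  rewrite powRK ?(ltW g0) // in m1; rewrite powRKK ?(ltW g0) ?(ltW K0) // in m2.
  by apply/andP; split; [exact: m2 | exact: m1].
have cv : (p <= 0) || (1 <= p) by rewrite pg orbT.
have pg' : 1 < p by rewrite lt_def p1.
have J : powR g p <= S.
  rewrite -eJ; apply: ler_sum => i _; rewrite -tg.
  by apply: ler_wpM2l => //; apply: tang_cvx.
have Ch : S <= ell a h p g.
  rewrite -eL; apply: ler_sum => i _; apply: ler_wpM2l => //.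
  by have [+ _] := chord a h p (x i) a0 h1 (xb i) => /(_ cv).
have Kb := (Kg.1 cv).
split=> hp; first by lra.
have S0 : 0 < S by lra.
have [m1 _] := powR_inv_mono (powR g p) S p gp J.
have [m2 _] := powR_inv_mono S (Kant h p * powR g p) p S0 (le_trans Ch Kb).
rewrite powRK ?(ltW g0) // in m1; rewrite powRKK ?(ltW g0) ?(ltW K0) // in m2.
by apply/andP; split; [exact: m1 | exact: m2].
Qed.

End Scal.

Section Mat.
Local Open Scope sesquilinear_scope.
Variable R : realType.
Local Notation C := R[i].

Lemma adj_mul m n p (A : 'M[C]_(m,n)) (B : 'M[C]_(n,p)) :
  (A *m B)^t* = B^t* *m A^t*.
Proof. by rewrite trmx_mul map_mxM. Qed.

Lemma adjE m n (A : 'M[C]_(m,n)) : (map_mx conjC A)^T = A^t*.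
Proof. by rewrite map_trmx. Qed.

Lemma hermP n (M : 'M[C]_n) : M \is hermsymmx <-> M^t* = M.
Proof.
split => [/is_hermitianmxP|H]; first by rewrite expr0 scale1r => {2}->.
by apply/is_hermitianmxP; rewrite expr0 scale1r H.
Qed.

Lemma psd_conjW m n (W : 'M[C]_(m,n)) (M : 'M[C]_m) :
  psdmx M -> psdmx (W^t* *m M *m W).
Proof.
move=> [/hermP hM qM]; split.
  by apply/hermP; rewrite !adj_mul trmxCK hM mulmxA.
move=> v; have := qM (v *m W^t*).
by rewrite !adjE !adj_mul trmxCK !mulmxA.
Qed.

Lemma psd1 n : psdmx (1%:M : 'M[C]_n).
Proof.
split; first by apply/hermP; rewrite trmx1 map_mx1.
move=> v; rewrite mulmx1 mxE; apply: sumr_ge0 => i _.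
by rewrite !mxE mul_conjC_ge0.
Qed.

Lemma adj_delta m n (i : 'I_m) (j : 'I_n) : (delta_mx i j : 'M[C]_(m,n))^t* = delta_mx j i.
Proof.
apply/matrixP => a b; rewrite !mxE.
by case: (_ == _); case: (_ == _); rewrite /= ?conjC1 ?conjC0.
Qed.

Lemma psd_delta n (i : 'I_n) : psdmx (delta_mx i i : 'M[C]_n).
Proof.
have := @psd_conjW 1 n (delta_mx 0 i) 1%:M (psd1 1).
by rewrite adj_delta mulmx1 mul_delta_mx.
Qed.

Lemma psd_add n (A B : 'M[C]_n) : psdmx A -> psdmx B -> psdmx (A + B).
Proof.
move=> [/hermP hA qA] [/hermP hB qB]; split.
  by apply/hermP; rewrite raddfD /= raddfD /= hA hB.
move=> v; rewrite mulmxDr mulmxDl mxE; exact: addr_ge0.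
Qed.

Lemma psd_scale n (c : R) (A : 'M[C]_n) : 0 <= c -> psdmx A -> psdmx (c%:C *: A).
Proof.
move=> c0 [/hermP hA qA]; split.
  apply/hermP; apply/matrixP => a b; rewrite !mxE.
  rewrite rmorphM /= conj_Creal; last by rewrite realE ler0c c0.
  by have /matrixP /(_ a b) := hA; rewrite !mxE => ->.
move=> v; rewrite -scalemxAr -scalemxAl mxE; apply: mulr_ge0 => //.
by rewrite ler0c.
Qed.

Lemma psd_sum n (I : finType) (c : I -> R) (A : I -> 'M[C]_n) :
  (forall i, 0 <= c i) -> (forall i, psdmx (A i)) ->
  psdmx (\sum_i (c i)%:C *: A i).
Proof.
move=> c0 hA; apply: (big_ind (fun M => psdmx M)) => //.
- by have := @psd_scale n 0 1%:M (lexx 0) (psd1 n); rewrite scale0r.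
- exact: psd_add.
- move=> i _; exact: psd_scale.
Qed.


Lemma realC (z : C) : z \is Num.real -> z = (complex.Re z)%:C.
Proof. move=> /Creal_ReP hz. have := (@complexRe R z). rewrite hz. by move=> ->. Qed.

Lemma unitU {n} (M : 'M[C]_n) : spectralmx M *m (spectralmx M)^t* = 1%:M.
Proof. exact/unitarymxP/spectral_unitarymx. Qed.

Lemma unitU' {n} (M : 'M[C]_n) : (spectralmx M)^t* *m spectralmx M = 1%:M.
Proof. by rewrite -invmx_unitary ?spectral_unitarymx // mulVmx // spectral_unit. Qed.

Lemma specE {n} {M : 'M[C]_n} : M \is hermsymmx ->
  M = (spectralmx M)^t* *m diag_mx (spectral_diag M) *m spectralmx M.
Proof.
move=> hM; have /orthomx_spectralP {1}-> := hermitian_normalmx hM.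
by rewrite invmx_unitary ?spectral_unitarymx.
Qed.

Lemma spec_real {n} {M : 'M[C]_n} i : M \is hermsymmx ->
  spectral_diag M 0 i = (complex.Re (spectral_diag M 0 i))%:C.
Proof.
move=> /hermitian_spectral_diag_real /mxOverP /(_ 0 i) hr; exact: realC.
Qed.

Lemma diagE {n} {M : 'M[C]_n} : M \is hermsymmx ->
  spectralmx M *m M *m (spectralmx M)^t* = diag_mx (spectral_diag M).
Proof.
move=> hM; rewrite {2}(specE hM) !mulmxA unitU mul1mx -mulmxA unitU mulmx1.
by [].
Qed.

Definition Pm {n} (M : 'M[C]_n) (i : 'I_n) := (spectralmx M)^t* *m delta_mx i i *m spectralmx M.

Lemma psd_Pm {n} (M : 'M[C]_n) i : psdmx (Pm M i).
Proof. by apply: psd_conjW; apply: psd_delta. Qed.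

Lemma mxfun_sum {n} f (M : 'M[C]_n) :
  mxfun f M = \sum_i (f (complex.Re (spectral_diag M 0 i)))%:C *: Pm M i.
Proof.
rewrite /mxfun invmx_unitary ?spectral_unitarymx // diag_mx_sum_delta.
rewrite mulmx_sumr mulmx_suml; apply: eq_bigr => i _.
by rewrite mxE -scalemxAr -scalemxAl.
Qed.

Lemma herm_sum {n} {M : 'M[C]_n} : M \is hermsymmx ->
  M = \sum_i (complex.Re (spectral_diag M 0 i))%:C *: Pm M i.
Proof.
move=> hM; rewrite {1}(specE hM) diag_mx_sum_delta.
rewrite mulmx_sumr mulmx_suml; apply: eq_bigr => i _.
by rewrite -scalemxAr -scalemxAl -spec_real.
Qed.

Lemma Pm_sum {n} (M : 'M[C]_n) : \sum_i Pm M i = 1%:M.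
Proof. by rewrite -mulmx_suml -mulmx_sumr -mx1_sum_delta mulmx1 unitU'. Qed.

Lemma tr_mxfun {n} f (M : 'M[C]_n) :
  \tr (mxfun f M) = \sum_i (f (complex.Re (spectral_diag M 0 i)))%:C.
Proof.
rewrite /mxfun mxtrace_mulC mulmxA mulmxV ?spectral_unit // mul1mx mxtrace_diag.
by apply: eq_bigr => i _; rewrite mxE.
Qed.

Lemma tr_conj {n} (M N : 'M[C]_n) :
  \tr N = \tr (spectralmx M *m N *m (spectralmx M)^t*).
Proof. by rewrite mxtrace_mulC mulmxA unitU' mul1mx. Qed.

Lemma diag_entry {n} {M : 'M[C]_n} j : M \is hermsymmx ->
  spectral_diag M 0 j = (spectralmx M *m M *m (spectralmx M)^t*) j j.
Proof. by move=> hM; rewrite diagE // mxE eqxx mulr1n. Qed.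

Lemma qf_entry {n} (U N : 'M[C]_n) j :
  (U *m N *m U^t*) j j = (row j U *m N *m (map_mx conjC (row j U))^T) 0 0.
Proof.
rewrite !mxE; apply: eq_bigr => l _; rewrite !mxE; congr (_ * _).
by apply: eq_bigr => k _; rewrite !mxE.
Qed.

Lemma psd_entry {n} (U N : 'M[C]_n) j : psdmx N -> 0 <= (U *m N *m U^t*) j j.
Proof. by move=> [_ q]; rewrite qf_entry. Qed.

Lemma entry_sum {n} (I : finType) (U : 'M[C]_n) (c : I -> C) (Q : I -> 'M[C]_n) j :
  (U *m (\sum_i c i *: Q i) *m U^t*) j j = \sum_i c i * (U *m Q i *m U^t*) j j.
Proof.
rewrite mulmx_sumr mulmx_suml summxE; apply: eq_bigr => i _.
by rewrite -scalemxAr -scalemxAl mxE.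
Qed.


Section PhiLin.
Variables n k : nat.
Variable Phi : 'M[C]_n -> 'M[C]_k.
Hypothesis hl : linear Phi.

Lemma Phi_add x y : Phi (x + y) = Phi x + Phi y.
Proof. by have := hl 1 x y; rewrite !scale1r. Qed.

Lemma Phi0 : Phi 0 = 0.
Proof. by have := hl (-1) 0 0; rewrite scaler0 addr0 scaleN1r addNr. Qed.

Lemma Phi_scale c x : Phi (c *: x) = c *: Phi x.
Proof. by have := hl c x 0; rewrite !addr0 Phi0 addr0. Qed.

Lemma Phi_sum (I : finType) (c : I -> C) (Q : I -> 'M[C]_n) :
  Phi (\sum_i c i *: Q i) = \sum_i c i *: Phi (Q i).
Proof.
rewrite (big_morph Phi Phi_add Phi0); apply: eq_bigr => i _; exact: Phi_scale.
Qed.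

Lemma Phi_sum1 (I : finType) (Q : I -> 'M[C]_n) :
  Phi (\sum_i Q i) = \sum_i Phi (Q i).
Proof. exact: (big_morph Phi Phi_add Phi0). Qed.

End PhiLin.

Lemma quad_shift {n} (X : 'M[C]_n) (c : C) i : X \is hermsymmx ->
  (spectralmx X *m (X - c%:M) *m (spectralmx X)^t*) i i = spectral_diag X 0 i - c.
Proof.
move=> hX; rewrite mulmxBr mulmxBl diagE // mul_mx_scalar -scalemxAl unitU.
by rewrite scalemx1 !mxE !eqxx !mulr1n.
Qed.

Lemma quad_shift' {n} (X : 'M[C]_n) (c : C) i : X \is hermsymmx ->
  (spectralmx X *m (c%:M - X) *m (spectralmx X)^t*) i i = c - spectral_diag X 0 i.
Proof.
move=> hX; rewrite mulmxBr mulmxBl diagE // mul_mx_scalar -scalemxAl unitU.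
by rewrite scalemx1 !mxE !eqxx !mulr1n.
Qed.

Lemma eig_lb {n} {X : 'M[C]_n} {a : R} : X \is hermsymmx ->
  lowner (a%:C)%:M X -> forall i, a <= complex.Re (spectral_diag X 0 i).
Proof.
move=> hX hl i; have := psd_entry (spectralmx X) _ i hl.
rewrite quad_shift // (spec_real i hX) -rmorphB ler0c subr_ge0 //=.
Qed.

Lemma eig_ub {n} {X : 'M[C]_n} {b : R} : X \is hermsymmx ->
  lowner X (b%:C)%:M -> forall i, complex.Re (spectral_diag X 0 i) <= b.
Proof.
move=> hX hl i; have := psd_entry (spectralmx X) _ i hl.
rewrite quad_shift' // (spec_real i hX) -rmorphB ler0c subr_ge0 //=.
Qed.


Lemma key n k (Phi : 'M[C]_n -> 'M[C]_k) (X : 'M[C]_n) (a h p : R) :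
  unital_positive_linear Phi -> X \is hermsymmx -> 0 < a -> 1 < h ->
  lowner (a%:C)%:M X -> lowner X ((a * h)%:C)%:M -> p != 0 ->
  exists t f : R, \tr (mxpow (Phi (mxpow X p)) p^-1) = t%:C /\
    \tr (Phi X) = f%:C /\
    (p <= 1 -> powR (Kant h p) p^-1 * f <= t <= f) /\
    (1 <= p -> f <= t <= powR (Kant h p) p^-1 * f).
Proof.
move=> [hl [hpos hone]] hX a0 h1 la lb p0.
pose lam i := complex.Re (spectral_diag X 0 i).
have hlam i : a <= lam i <= a * h.
  by rewrite (eig_lb hX la) (eig_ub hX lb).
have eZ : mxpow X p = \sum_i (powR (lam i) p)%:C *: Pm X i by apply: mxfun_sum.
have psdZ : psdmx (mxpow X p).
  by rewrite eZ; apply: psd_sum => i; [exact: powR_ge0 | exact: psd_Pm].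
set Y := Phi (mxpow X p).
have psdY : psdmx Y := hpos _ psdZ.
have hY := psdY.1.
have eY : Y = \sum_i (powR (lam i) p)%:C *: Phi (Pm X i) by rewrite /Y eZ Phi_sum.
set V := spectralmx Y.
pose w i j := (V *m Phi (Pm X i) *m V^t*) j j.
have w0 i j : 0 <= w i j by apply: psd_entry; apply: hpos; apply: psd_Pm.
have wR i j : w i j = (complex.Re (w i j))%:C by apply: realC; apply: ger0_real.
have wr0 i j : 0 <= complex.Re (w i j) by rewrite -ler0c -wR.
have w1' j : \sum_i w i j = 1.
  rewrite /w -summxE -mulmx_suml -mulmx_sumr -Phi_sum1 // Pm_sum hone mulmx1.
  by rewrite /V unitU mxE eqxx.
have w1 j : \sum_i complex.Re (w i j) = 1.
  apply: (@complexI R); rewrite rmorph_sum rmorph1 -(w1' j).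
  by apply: eq_bigr => i _; exact: (esym (wR i j)).
have emu j : complex.Re (spectral_diag Y 0 j) =
    \sum_i complex.Re (w i j) * powR (lam i) p.
  rewrite diag_entry // -/V [in V *m Y *m _]eY entry_sum.
  have -> : \sum_i (powR (lam i) p)%:C * (V *m Phi (Pm X i) *m V^t*) j j =
      (\sum_i complex.Re (w i j) * powR (lam i) p)%:C.
    rewrite rmorph_sum; apply: eq_bigr => i _.
    by rewrite -/(w i j) wR -rmorphM mulrC.
  by [].
exists (\sum_j powR (\sum_i complex.Re (w i j) * powR (lam i) p) p^-1).
exists (\sum_j \sum_i complex.Re (w i j) * lam i).
split.
  rewrite /mxpow tr_mxfun rmorph_sum; apply: eq_bigr => j _.
  by rewrite emu.
split.
  rewrite (tr_conj Y) {1}(herm_sum hX) Phi_sum // /mxtrace rmorph_sum.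
  apply: eq_bigr => j _; rewrite entry_sum rmorph_sum; apply: eq_bigr => i _.
  by rewrite -/(w i j) wR -rmorphM mulrC.
have Pj j := @pmean R _ (fun i => complex.Re (w i j)) lam a h p a0 h1 (wr0^~ j) (w1 j) hlam p0.
split => hp; apply/andP; split.
- rewrite mulr_sumr; apply: ler_sum => j _.
  by have /andP[] := (Pj j).1 hp.
- by apply: ler_sum => j _; have /andP[] := (Pj j).1 hp.
- by apply: ler_sum => j _; have /andP[] := (Pj j).2 hp.
- rewrite mulr_sumr; apply: ler_sum => j _.
  by have /andP[] := (Pj j).2 hp.
Qed.

End Mat.

Lemma split_low (R : realType) n (A B : 'M[R[i]]_n) (x y : R[i]) :
  (A + B) - (x + y)%:M = (A - x%:M) + (B - y%:M).
Proof.
apply/matrixP => i j; rewrite !mxE.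
by case: (i == j); rewrite /= ?mulr1n ?mulr0n; ring.
Qed.

Lemma split_up (R : realType) n (A B : 'M[R[i]]_n) (x y : R[i]) :
  (x + y)%:M - (A + B) = (x%:M - A) + (y%:M - B).
Proof.
apply/matrixP => i j; rewrite !mxE.
by case: (i == j); rewrite /= ?mulr1n ?mulr0n; ring.
Qed.

Lemma Kant_pos (R : realType) (h p : R) : 1 < h -> p != 0 -> 0 < Kant h p.
Proof.
move=> h1 p0; have [->|p1] := eqVneq p 1; first by rewrite /Kant eqxx ltr01.
have [r0 F0] := @rF_pos R h p h1 p0 p1.
by rewrite KantE // mulr_gt0 // powR_gt0.
Qed.

Theorem theorem4p8 (R : realType) (n k : nat) (A B : 'M[R[i]]_n) (m M : R)
  (Phi : 'M[R[i]]_n -> 'M[R[i]]_k) :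
  0 < m -> m < M ->
  posdefmx A -> posdefmx B ->
  lowner (m%:C)%:M A -> lowner A (M%:C)%:M ->
  lowner (m%:C)%:M B -> lowner B (M%:C)%:M ->
  unital_positive_linear Phi ->
  let h := M / m in
  let T (X : 'M[R[i]]_n) (p : R) := \tr (mxpow (Phi (mxpow X p)) p^-1) in
  (forall p : R, p < 0 \/ (0 < p /\ p <= 1) ->
     (powR (Kant h p) p^-1)%:C * (T A p + T B p) <= T (A + B) p /\
     T (A + B) p <= (powR (Kant h p) (- p^-1))%:C * (T A p + T B p)) /\
  (forall p : R, 1 <= p ->
     (powR (Kant h p) (- p^-1))%:C * (T A p + T B p) <= T (A + B) p /\
     T (A + B) p <= (powR (Kant h p) p^-1)%:C * (T A p + T B p)).
Proof.
move=> m0 mM pA pB lA uA lB uB hPhi h T.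
have h1 : 1 < h by rewrite /h ltr_pdivlMr // mul1r.
have hA := pA.1; have hB := pB.1.
have hS : (A + B) \is hermsymmx.
  apply/hermP; rewrite raddfD /= raddfD /=.
  by move/hermP: hA => ->; move/hermP: hB => ->.
have eh : m * h = M by rewrite /h; field; rewrite gt_eqF.
have uA' : lowner A ((m * h)%:C)%:M by rewrite eh.
have uB' : lowner B ((m * h)%:C)%:M by rewrite eh.
have lS : lowner ((m + m)%:C)%:M (A + B).
  by rewrite /lowner rmorphD split_low; apply: psd_add.
have uS : lowner (A + B) (((m + m) * h)%:C)%:M.
  have -> : (m + m) * h = M + M by rewrite mulrDl eh.
  by rewrite /lowner rmorphD split_up; apply: psd_add.
have mm0 : 0 < m + m by lra.
have gen p : p != 0 ->
  exists tA tB tS fA fB fS : R,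
   [/\ T A p = tA%:C, T B p = tB%:C, T (A + B) p = tS%:C, fS = fA + fB &
   (p <= 1 -> [/\ powR (Kant h p) p^-1 * fA <= tA <= fA,
       powR (Kant h p) p^-1 * fB <= tB <= fB &
       powR (Kant h p) p^-1 * fS <= tS <= fS]) /\
   (1 <= p -> [/\ fA <= tA <= powR (Kant h p) p^-1 * fA,
       fB <= tB <= powR (Kant h p) p^-1 * fB &
       fS <= tS <= powR (Kant h p) p^-1 * fS])].
  move=> p0.
  have [tA [fA [eTA [eFA [IA1 IA2]]]]] := @key R _ _ _ _ _ _ _ hPhi hA m0 h1 lA uA' p0.
  have [tB [fB [eTB [eFB [IB1 IB2]]]]] := @key R _ _ _ _ _ _ _ hPhi hB m0 h1 lB uB' p0.
  have [tS [fS [eTS [eFS [IS1 IS2]]]]] := @key R _ _ _ _ _ _ _ hPhi hS mm0 h1 lS uS p0.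
  exists tA, tB, tS, fA, fB, fS; split => //.
    apply: (@complexI R); rewrite rmorphD -eFS.
    rewrite Phi_add ?mxtraceD ?eFA ?eFB //; by case: hPhi.
  by split => hp; split; [exact: IA1 | exact: IB1 | exact: IS1 | exact: IA2 | exact: IB2 | exact: IS2].
have kpos p : p != 0 -> 0 < powR (Kant h p) p^-1.
  by move=> p0; rewrite powR_gt0 // Kant_pos.
have kinv p : powR (Kant h p) (- p^-1) = (powR (Kant h p) p^-1)^-1.
  by rewrite powRN.
split.
  move=> p hp.
  have p0 : p != 0 by case: hp => [pn|[pp _]]; [rewrite lt_eqF | rewrite gt_eqF].
  have pl : p <= 1 by case: hp => [pn|[_ pl]]; lra.
  have [tA [tB [tS [fA [fB [fS [-> -> -> eF [Ig _]]]]]]]] := gen p p0.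
  rewrite kinv -!rmorphD -!rmorphM !lecR.
  have [I1 I2 I3] := Ig pl.
  move: I1 I2 I3 (kpos p p0).
  set kp := powR (Kant h p) p^-1 => /andP[a1 a2] /andP[b1 b2] /andP[c1 c2] k0.
  have ki : kp^-1 * kp = 1 by rewrite mulVf // gt_eqF.
  have k1 : 0 < kp^-1 by rewrite invr_gt0.
  split; first by nra.
  have : kp^-1 * (kp * fA) <= kp^-1 * tA by rewrite ler_pM2l.
  have : kp^-1 * (kp * fB) <= kp^-1 * tB by rewrite ler_pM2l.
  rewrite !mulrA ki !mul1r; nra.
move=> p pl.
have p0 : p != 0 by rewrite gt_eqF //; lra.
have [tA [tB [tS [fA [fB [fS [-> -> -> eF [_ Ig]]]]]]]] := gen p p0.
rewrite kinv -!rmorphD -!rmorphM !lecR.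
have [I1 I2 I3] := Ig pl.
move: I1 I2 I3 (kpos p p0).
set kp := powR (Kant h p) p^-1 => /andP[a1 a2] /andP[b1 b2] /andP[c1 c2] k0.
have ki : kp^-1 * kp = 1 by rewrite mulVf // gt_eqF.
have k1 : 0 < kp^-1 by rewrite invr_gt0.
split; last by nra.
have : kp^-1 * tA <= kp^-1 * (kp * fA) by rewrite ler_pM2l.
have : kp^-1 * tB <= kp^-1 * (kp * fB) by rewrite ler_pM2l.
rewrite !mulrA ki !mul1r; nra.
Qed.
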